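(* Let $q$ be a prime power and let $V\subseteq GF(q)^n$ be a linear subspace. Then $$\sum_{k=0}^n\frac{|\mathcal{A}_k(V)|}{(q-1)^k\binom{n}{k}}=\frac{(n+1)(q-1)}{q^{1+n-\dim V}}\sum_{k=0}^n\frac{|\mathcal{A}_k(V^\perp)|}{k+1}\left(1-\frac{(-1)^{k+1}}{(q-1)^{k+1}}\right).$$
   Context: The weight ${\rm wt}(x)$ of $x\in GF(q)^n$ is the number of its nonzero coordinates. For $W\subseteq GF(q)^n$, $\mathcal{A}_i(W)=\{x\in W:{\rm wt}(x)=i\}$. $V^\perp=\{u\in GF(q)^n:(u,v)=0\text{ for all }v\in V\}$ with the standard bilinear form $(u,v)=\sum_i u_iv_i$. *)

(* Defs.v *)
From HB Require Import structures.
From mathcomp Require Import all_boot all_order all_algebra all_field.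
Set Implicit Arguments. Unset Strict Implicit. Unset Printing Implicit Defensive.
Import Order.TTheory GRing.Theory Num.Theory.
Local Open Scope ring_scope.

Section Defs.
Variables (F : finFieldType) (n : nat).

Definition bform (u v : 'rV[F]_n) : F := \sum_(i < n) u 0 i * v 0 i.

Definition wt (x : 'rV[F]_n) : nat := #|[set i : 'I_n | x 0 i != 0]|.

Definition Aw (W : {pred 'rV[F]_n}) (i : nat) : {set 'rV[F]_n} :=
  [set x | (x \in W) && (wt x == i)].

Definition perp (V : {vspace 'rV[F]_n}) : {set 'rV[F]_n} :=
  [set u | [forall v, (v \in V) ==> (bform u v == 0)]].
End Defs.

(* Main.v *)
Require Import Defs.
From HB Require Import structures.
From mathcomp Require Import all_boot all_order all_algebra all_field.
From mathcomp Require Import zify ring lra.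
Set Implicit Arguments. Unset Strict Implicit. Unset Printing Implicit Defensive.
Import Order.TTheory GRing.Theory Num.Theory.
Local Open Scope ring_scope.

Section X1.
Variables (R : comNzRingType) (n : nat).

Lemma card_notin (A : {set 'I_n}) : #|[pred i | i \notin A]| = (n - #|A|)%N.
Proof.
have h := cardsC A; rewrite card_ord in h.
transitivity #|~: A|; first by apply: eq_card => i; rewrite !inE.
lia.
Qed.

Lemma sum_supsets (A : {set 'I_n}) (y z : R) :
  \sum_(S : {set 'I_n} | A \subset S) y ^+ #|S| * z ^+ (n - #|S|)
  = y ^+ #|A| * (y + z) ^+ (n - #|A|).
Proof.
pose Fc (i : 'I_n) (c : bool) := if c then y else (if i \in A then 0 else z).
have E1 : y ^+ #|A| * (y + z) ^+ (n - #|A|) = \prod_(i : 'I_n) \sum_(c : bool) Fc i c.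
  rewrite [RHS](bigID (fun i => i \in A)) /=; congr (_ * _).
    by rewrite -prodr_const; apply: eq_bigr => i iA; rewrite big_bool /Fc /= iA addr0.
  rewrite (eq_bigr (fun _ => y + z)); last by move=> i iA; rewrite big_bool /Fc /= (negbTE iA).
  rewrite prodr_const; congr (_ ^+ _).
  by rewrite -(card_notin A).
rewrite E1 bigA_distr_bigA /=.
rewrite (reindex (fun S : {set 'I_n} => [ffun i => i \in S])) /=; last first.
  exists (fun f : {ffun 'I_n -> bool} => [set i | f i]) => f _.
    by apply/setP => i; rewrite inE ffunE.
  by apply/ffunP => i; rewrite !ffunE inE.
rewrite [RHS](bigID (fun S : {set 'I_n} => A \subset S)) /=.
rewrite [X in _ = _ + X]big1 ?addr0; last first.
  move=> S /subsetPn [i iA iS].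
  rewrite (bigD1 i) //= ffunE /Fc (negbTE iS) iA mul0r //.
apply: eq_bigr => S AS.
rewrite [RHS](bigID (fun i => i \in S)) /=; congr (_ * _).
  by rewrite -prodr_const; apply: eq_bigr => i iS; rewrite ffunE /Fc iS.
rewrite (eq_bigr (fun _ => z)).
  by rewrite prodr_const card_notin.
move=> i iS; rewrite ffunE /Fc (negbTE iS).
by case: ifP => // iA; move/subsetP: AS => /(_ i iA); rewrite (negbTE iS).
Qed.
End X1.

Section LA.
Variables (F : finFieldType) (n : nat).
Local Notation q := #|F|.

Definition DS (S : {set 'I_n}) : 'M[F]_n := \matrix_(i, j) ((i == j) && (i \in S))%:R.

Lemma mul_DS (v : 'M[F]_(1, n)) S j : (v *m DS S) 0 j = if j \in S then v 0 j else 0.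
Proof.
rewrite mxE (bigD1 j) //= big1 ?addr0.
  by rewrite mxE eqxx /=; case: (j \in S); rewrite ?mulr1 ?mulr0.
by move=> k kj; rewrite mxE (negbTE kj) /= mulr0.
Qed.

Lemma DS_tr S : (DS S)^T = DS S.
Proof.
apply/matrixP => i j; rewrite !mxE; case: (eqVneq i j) => [->|ne] //.
Qed.

Lemma sub_DS (v : 'rV[F]_n) S :
  (v <= DS S)%MS = [forall i, (i \notin S) ==> (v 0 i == 0)].
Proof.
apply/idP/forallP.
  move/submxP => [w ->] i; apply/implyP => iS.
  by rewrite mul_DS (negbTE iS).
move=> H; have -> : v = v *m DS S.
  apply/rowP => j; rewrite mul_DS; case: ifP => // jS.
  by have := H j; rewrite jS /= => /eqP.
exact: submxMl.
Qed.

Lemma card_rowspace m (A : 'M[F]_(m, n)) :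
  #|[set v : 'rV[F]_n | (v <= A)%MS]| = (q ^ \rank A)%N.
Proof.
have -> : [set v : 'rV[F]_n | (v <= A)%MS] =
          [set w *m row_base A | w : 'rV[F]_(\rank A)].
  apply/setP => v; rewrite inE; apply/idP/imsetP.
    by rewrite -{1}(eq_row_base A) => /submxP [w ->]; exists w.
  by move=> [w _ ->]; rewrite -(eq_row_base A) submxMl.
rewrite card_imset; first by rewrite card_mx mul1n.
exact: row_free_inj (row_base_free A).
Qed.

Lemma card_DS S : \rank (DS S) = #|S|.
Proof.
apply: (@expnI q); first exact: finNzRing_gt1.
rewrite -card_rowspace.
have -> : [set v : 'rV[F]_n | (v <= DS S)%MS] =
   [set (\row_j f j : 'rV[F]_n) | f : {ffun 'I_n -> F} in pffun_on (0 : F) S predT].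
  apply/setP => v; rewrite inE sub_DS; apply/forallP/imsetP.
    move=> H; exists [ffun j => v 0 j]; last by apply/rowP => j; rewrite !mxE ffunE.
    apply/pffun_onP; split => //; apply/subsetP => i; rewrite inE ffunE.
    by apply: contraR => iS; have := H i; rewrite iS /= => /eqP ->.
  move=> [f /pffun_onP [sf _] ->] i; apply/implyP => iS; rewrite mxE.
  by apply: contraR iS => fi; apply: (subsetP sf); rewrite inE.
rewrite card_in_imset ?card_pffun_on //.
by move=> f g _ _ /rowP e; apply/ffunP => j; have := e j; rewrite !mxE.
Qed.

Lemma key_mx m (B : 'M[F]_(m, n)) S :
  (#|[set v : 'rV[F]_n | (v <= B)%MS && (v <= DS S)%MS]| * q ^ (n - #|S|))%N =
  (#|[set v : 'rV[F]_n | (v <= B)%MS]| *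
   #|[set u : 'rV[F]_n | (u *m B^T == 0%R) && (u <= DS (~: S))%MS]|)%N.
Proof.
have e1 : [set v : 'rV[F]_n | (v <= B)%MS && (v <= DS S)%MS] =
          [set v : 'rV[F]_n | (v <= B :&: DS S)%MS].
  by apply/setP => v; rewrite !inE sub_capmx.
have e2 : [set u : 'rV[F]_n | (u *m B^T == 0%R) && (u <= DS (~: S))%MS] =
          [set u : 'rV[F]_n | (u <= kermx (row_mx B^T (DS S)))%MS].
  apply/setP => u; rewrite !inE sub_kermx mul_mx_row row_mx_eq0; congr (_ && _).
  rewrite sub_DS; apply/forallP/eqP.
    move=> H; apply/rowP => j; rewrite mul_DS mxE; case: ifP => // jS.
    by have := H j; rewrite inE jS /= => /eqP.
  move=> H i; apply/implyP; rewrite inE negbK => iS.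
  by have := congr1 (fun M : 'rV[F]_n => M 0 i) H; rewrite mul_DS iS mxE => ->.
rewrite e1 e2 !card_rowspace mxrank_ker -!expnD; congr (q ^ _)%N.
have h1 := mxrank_sum_cap B (DS S).
have h2 : \rank (row_mx B^T (DS S)) = \rank (B + DS S)%MS.
  have -> : row_mx B^T (DS S) = (col_mx B (DS S))^T by rewrite tr_col_mx DS_tr.
  by rewrite mxrank_tr (addsmxE B (DS S)).1.
have h3 := rank_leq_col (B + DS S)%MS.
have h4 : (#|S| <= n)%N by have := max_card S; rewrite card_ord.
rewrite card_DS in h1; rewrite h2; lia.
Qed.
End LA.
Arguments DS {F n} S.

Section Bridge.
Variables (F : finFieldType) (n : nat) (V : {vspace 'rV[F]_n}).
Local Notation q := #|F|.

Definition BV : 'M[F]_(\dim V, n) := \matrix_(i < \dim V, j < n) (vbasis V)`_i 0 j.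

Lemma rowBV i : row i BV = (vbasis V)`_i.
Proof. by apply/rowP => j; rewrite !mxE. Qed.

Lemma memBV v : (v \in V) = (v <= BV)%MS.
Proof.
apply/idP/submxP.
  move=> vV; exists (\row_i coord (vbasis V) i v).
  rewrite mulmx_sum_row {1}(coord_vbasis vV); apply: eq_bigr => i _.
  by rewrite mxE rowBV.
move=> [w ->]; rewrite mulmx_sum_row; apply: memv_suml => i _; apply: memvZ.
by rewrite rowBV; apply: vbasis_mem; apply: mem_nth; rewrite size_tuple.
Qed.

Lemma bformE (u v : 'rV[F]_n) : bform u v = (u *m v^T) 0 0.
Proof. by rewrite /bform mxE; apply: eq_bigr => i _; rewrite mxE. Qed.

Lemma perpBV u : (u \in perp V) = (u *m BV^T == 0).
Proof.
rewrite inE; apply/forallP/eqP.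
  move=> H; apply/rowP => i; rewrite !mxE.
  have h : bform u (vbasis V)`_i = 0.
    by apply/eqP; apply: (implyP (H _)); rewrite vbasis_mem ?mem_nth ?size_tuple.
  by rewrite -[RHS]h /bform; apply: eq_bigr => j _; rewrite !mxE.
move=> H v; apply/implyP; rewrite memBV => /submxP [w ->].
by rewrite bformE trmx_mul mulmxA H mul0mx mxE.
Qed.

Definition supp (v : 'rV[F]_n) := [set i | v 0 i != 0].

Lemma supp_sub v (S : {set 'I_n}) : (supp v \subset S) = (v <= DS S)%MS.
Proof.
rewrite sub_DS; apply/subsetP/forallP => H i.
  by apply/implyP => iS; apply: contraR iS => nz; apply: H; rewrite inE.
by rewrite inE => nz; apply: contraR nz => iS; exact: (implyP (H i) iS).
Qed.

Lemma key_V (S : {set 'I_n}) :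
  (#|[set v | (v \in V) && (supp v \subset S)]| * q ^ (n - #|S|))%N =
  (#|[set v | v \in V]| * #|[set u | (u \in perp V) && (supp u \subset ~: S)]|)%N.
Proof.
have -> : [set v | (v \in V) && (supp v \subset S)] =
          [set v | (v <= BV)%MS && (v <= DS S)%MS].
  by apply/setP => v; rewrite !inE memBV supp_sub.
have -> : [set v | v \in V] = [set v | (v <= BV)%MS].
  by apply/setP => v; rewrite !inE memBV.
have -> : [set u | (u \in perp V) && (supp u \subset ~: S)] =
          [set u | (u *m BV^T == 0%R) && (u <= DS (~: S))%MS].
  by apply/setP => v; rewrite [in LHS]in_set [in RHS]in_set perpBV supp_sub.
exact: key_mx.
Qed.
End Bridge.

Lemma sum_constP (R : nmodType) (T : finType) (P : pred T) (c : R) :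
  \sum_(v | P v) c = c *+ #|[set v | P v]|.
Proof. by rewrite -sumr_const; apply: eq_bigl => v; rewrite inE. Qed.

Section MacW.
Variables (R : comNzRingType) (F : finFieldType) (n : nat) (V : {vspace 'rV[F]_n}).
Local Notation q := #|F|.

Lemma macw (a b : R) :
  (\sum_(v | v \in V) a ^+ (n - wt v) * b ^+ wt v) *+ (q ^ n) =
  (\sum_(u in perp V) (a + b *+ (q - 1)) ^+ (n - wt u) * (a - b) ^+ wt u)
     *+ #|[set v | v \in V]|.
Proof.
have step1 (v : 'rV[F]_n) : a ^+ (n - wt v) * b ^+ wt v =
   \sum_(S : {set 'I_n} | supp v \subset S) b ^+ #|S| * (a - b) ^+ (n - #|S|).
  by rewrite sum_supsets addrC subrK mulrC.
rewrite (eq_bigr _ (fun v _ => step1 v)).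
rewrite (exchange_big_dep xpredT) //=.
under eq_bigr => S _ do rewrite sum_constP.
rewrite -sumrMnl.
have e2 (S : {set 'I_n}) : (b ^+ #|S| * (a - b) ^+ (n - #|S|)) *+
     #|[set v | (v \in V) && (supp v \subset S)]| *+ q ^ n =
     ((b *+ q) ^+ #|S| * (a - b) ^+ (n - #|S|) *+
       #|[set u | (u \in perp V) && (supp u \subset ~: S)]|) *+ #|[set v | v \in V]|.
  have hS : (#|S| <= n)%N by have := max_card S; rewrite card_ord.
  have hq : (q ^ n = q ^ #|S| * q ^ (n - #|S|))%N by rewrite -expnD subnKC.
  rewrite -mulrnA hq mulnCA key_V.
  rewrite exprMn_n mulrnAl -!mulrnA; congr (_ *+ _); nia.
rewrite (eq_bigr _ (fun S _ => e2 S)).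
rewrite sumrMnl; congr (_ *+ _).
rewrite (reindex_inj (@setC_inj _)) /=.
under eq_bigr => T _ do rewrite setCK.
have cC (T : {set 'I_n}) : #|~: T| = (n - #|T|)%N.
  by rewrite -(card_notin T); apply: eq_card => i; rewrite !inE.
under eq_bigr => T _ do rewrite cC.
have e3 (T : {set 'I_n}) : (b *+ q) ^+ (n - #|T|) * (a - b) ^+ (n - (n - #|T|)) *+
       #|[set u | (u \in perp V) && (supp u \subset T)]| =
    \sum_(u | (u \in perp V) && (supp u \subset T)) (a - b) ^+ #|T| * (b *+ q) ^+ (n - #|T|).
  have hT : (#|T| <= n)%N by have := max_card T; rewrite card_ord.
  by rewrite sum_constP subKn // mulrC.
under eq_bigr => T _ do rewrite e3.
rewrite (exchange_big_dep (fun u => u \in perp V)) /=; last by move=> T u _ /andP[].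
apply: eq_bigr => u uP.
rewrite uP /=.
rewrite sum_supsets mulrC; congr (_ ^+ _ * _).
have q1 : (0 < q)%N by apply: leq_trans (finNzRing_gt1 F).
have e : b *+ #|F| = b *+ (#|F| - 1) + b by rewrite -mulrSr subn1 prednK.
by rewrite e addrCA subrK addrC.
Qed.
End MacW.

Definition Ip (p : {poly rat}) : rat := \sum_(i < size p) p`_i / i.+1%:R.

Lemma IpE N (p : {poly rat}) : (size p <= N)%N -> Ip p = \sum_(i < N) p`_i / i.+1%:R.
Proof.
move=> hN; rewrite /Ip (big_ord_widen N (fun i => p`_i / i.+1%:R)) //.
rewrite big_mkcond; apply: eq_bigr => i _; case: ifP => // /negbT.
by rewrite -leqNgt => h; rewrite nth_default // mul0r.
Qed.

Lemma IpD (p r : {poly rat}) : Ip (p + r) = Ip p + Ip r.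
Proof.
pose N := maxn (size p) (size r).
rewrite (@IpE N) ?(leq_trans (size_polyD _ _)) // (@IpE N p) ?leq_maxl //.
rewrite (@IpE N r) ?leq_maxr // -big_split /=; apply: eq_bigr => i _.
by rewrite coefD mulrDl.
Qed.

Lemma IpZ c (p : {poly rat}) : Ip (c *: p) = c * Ip p.
Proof.
rewrite (@IpE (size p)) ?size_scale_leq // /Ip mulr_sumr; apply: eq_bigr => i _.
by rewrite coefZ mulrA.
Qed.

Lemma Ip0 : Ip 0 = 0.
Proof. by rewrite /Ip size_poly0 big_ord0. Qed.

Lemma IpMn (p : {poly rat}) m : Ip (p *+ m) = Ip p *+ m.
Proof. by elim: m => [|m IH]; rewrite ?mulr0n ?Ip0 // !mulrS IpD IH. Qed.

Lemma Ip_sum (I : finType) (P : pred I) (G : I -> {poly rat}) :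
  Ip (\sum_(i | P i) G i) = \sum_(i | P i) Ip (G i).
Proof. exact: (big_morph Ip IpD Ip0). Qed.

Lemma Ip_deriv (p : {poly rat}) : Ip p^`() = p.[1] - p.[0].
Proof.
have hs : (size p^`() <= size p)%N.
  have [->|p0] := eqVneq p 0; first by rewrite deriv0.
  exact: ltnW (lt_size_deriv p0).
rewrite (IpE hs) horner_coef0 horner_coef.
under eq_bigr => i _ do rewrite coef_deriv -[p`_i.+1 *+ _]mulr_natr mulfK ?pnatr_eq0 //.
under [X in _ = X - _]eq_bigr => i _ do rewrite expr1n mulr1.
case hN: (size p) => [|N].
  by rewrite !big_ord0 nth_default ?subrr // hN.
rewrite [LHS]big_ord_recr [in RHS]big_ord_recl /= (@nth_default _ _ p N.+1) ?hN // addr0.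
by rewrite addrC addKr; apply: eq_bigr => i _; rewrite /bump leq0n add1n.
Qed.

Lemma IpN (p : {poly rat}) : Ip (- p) = - Ip p.
Proof. by rewrite -scaleN1r IpZ mulN1r. Qed.

Lemma deriv_1cX (c : rat) : (1 - c *: 'X)^`() = - c%:P.
Proof. by rewrite derivB -polyC1 derivC derivZ derivX sub0r alg_polyC. Qed.

Lemma Ip_lin_pow (c : rat) k : c != 0 ->
  Ip ((1 - c *: 'X) ^+ k) = (1 - (1 - c) ^+ k.+1) / (c * k.+1%:R).
Proof.
move=> c0; set P := 1 - c *: 'X.
have h := Ip_deriv (P ^+ k.+1).
rewrite deriv_exp deriv_1cX /= IpMn -polyCN mul_polyC IpZ in h.
have e1 : P.[1] = 1 - c by rewrite /P !hornerE.
have e0 : P.[0] = 1 by rewrite /P !hornerE ?mulr0 ?subr0.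
rewrite !horner_exp e1 e0 expr1n -mulr_natr in h.
have h2 : Ip (P ^+ k) * (c * k.+1%:R) = 1 - (1 - c) ^+ k.+1.
  by rewrite -[1 - (1 - c) ^+ k.+1]opprB -h; ring.
by rewrite -h2 mulfK // mulf_neq0 // pnatr_eq0.
Qed.

Lemma beta_step (A B Fc : rat) (j m : nat) :
  B *+ j.+1 + - A *+ m.+1 = 0 -> B * Fc = (j`! * (m.+1)`!)%:R ->
  A * Fc = ((j.+1)`! * m`!)%:R.
Proof.
move=> h IHm.
rewrite -[B *+ _]mulr_natr -[(- A) *+ _]mulr_natr in h.
have hA : A * m.+1%:R = B * j.+1%:R.
  apply/eqP; rewrite -subr_eq0; apply/eqP.
  have e : A * m.+1%:R - B * j.+1%:R = - (B * j.+1%:R + - A * m.+1%:R) by ring.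
  by rewrite e h oppr0.
have hm : (m.+1%:R : rat) != 0 by rewrite pnatr_eq0.
apply: (mulIf hm); rewrite mulrAC hA mulrAC IHm !factS !natrM; ring.
Qed.

Lemma Ip_beta j m :
  Ip ('X^j * (1 - 'X) ^+ m) * ((j + m).+1)`!%:R = (j`! * m`!)%:R.
Proof.
elim: j m => [|j IH] m.
  rewrite expr0 mul1r -[X in 1 - X]scale1r Ip_lin_pow ?oner_neq0 //.
  rewrite subrr expr0n subr0 mul1r add0n factS natrM fact0 mul1n.
  by rewrite mul1r mulrA mulVf ?mul1r // pnatr_eq0.
have h := Ip_deriv ('X^(j.+1) * (1 - 'X) ^+ m.+1).
have e1 : ('X^(j.+1) * (1 - 'X) ^+ m.+1 : {poly rat}).[1] = 0.
  by rewrite hornerM !horner_exp hornerD hornerN hornerX -polyC1 hornerC subrr expr0n mulr0.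
have e0 : ('X^(j.+1) * (1 - 'X) ^+ m.+1 : {poly rat}).[0] = 0.
  by rewrite hornerM !horner_exp hornerX expr0n mul0r.
rewrite e1 e0 subrr derivM derivXn deriv_exp derivB derivX -polyC1 derivC sub0r /= in h.
rewrite polyC1 mulrnAl mulrnAr mulN1r mulrN IpD !IpMn IpN in h.
have IHm := IH m.+1.
rewrite addSnnS; exact: beta_step h IHm.
Qed.

Lemma wt_le (F : finFieldType) n (v : 'rV[F]_n) : (wt v <= n)%N.
Proof. by rewrite /wt; have := max_card [set i | v 0 i != 0]; rewrite card_ord. Qed.

Lemma sum_wt (F : finFieldType) n (W : {pred 'rV[F]_n}) (f : nat -> rat) :
  \sum_(v | v \in W) f (wt v) = \sum_(k < n.+1) (#|Aw W k|)%:R * f k.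
Proof.
have e1 (v : 'rV[F]_n) : f (wt v) = \sum_(k < n.+1 | wt v == k) f k.
  rewrite (big_pred1 (inord (wt v))) ?inordK ?ltnS ?wt_le // => k.
  by rewrite /= -(inj_eq val_inj) /= inordK ?ltnS ?wt_le // eq_sym.
rewrite (eq_bigr _ (fun v _ => e1 v)).
rewrite (exchange_big_dep xpredT) //=.
apply: eq_bigr => k _; rewrite sum_constP mulr_natl; congr (_ *+ _).
Qed.

Lemma termV n (t : rat) k : (k <= n)%N -> t != 0 ->
  Ip ((1 - 'X) ^+ (n - k) * (t^-1 *: 'X) ^+ k) =
  ((t ^+ k) * ('C(n, k))%:R)^-1 / (n.+1)%:R.
Proof.
move=> kn t0.
rewrite exprZn -scalerAr IpZ [_ * 'X^k]mulrC.
have hb := Ip_beta k (n - k); rewrite subnKC // in hb.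
rewrite factS -(bin_fact kn) !natrM in hb.
have nzf : ((k`! * (n - k)`!)%:R : rat) != 0.
  by rewrite pnatr_eq0 muln_eq0 negb_or -!lt0n !fact_gt0.
have nzC : ('C(n, k)%:R : rat) != 0 by rewrite pnatr_eq0 -lt0n bin_gt0.
have nzN : (n.+1%:R : rat) != 0 by rewrite pnatr_eq0.
rewrite natrM in nzf.
have -> : Ip ('X^k * (1 - 'X) ^+ (n - k)) =
   (k`!%:R * (n - k)`!%:R) / (n.+1%:R * ('C(n, k)%:R * (k`!%:R * (n - k)`!%:R))).
  by rewrite -[X in X / _]hb mulfK //; apply: mulf_neq0 => //; apply: mulf_neq0.
rewrite exprVn; field.
have h1 : (1 + n%:R : rat) != 0 by rewrite addrC natr1.
move: nzf; rewrite mulf_eq0 negb_or => /andP[f1 f2].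
by rewrite h1 nzC expf_neq0 // f1 f2.
Qed.

Lemma termP (T : nat) k : (0 < T)%N ->
  Ip ((1 - (1 + (T%:R : rat)^-1) *: 'X) ^+ k) =
  T%:R / (T%:R + 1) / k.+1%:R * (1 - (-1) ^+ k.+1 / (T ^ k.+1)%N%:R).
Proof.
move=> T0.
have tnz : (T%:R : rat) != 0 by rewrite pnatr_eq0 -lt0n.
have t1 : (T%:R + 1 : rat) != 0 by rewrite natr1 pnatr_eq0.
have cnz : (1 + (T%:R : rat)^-1) != 0.
  by rewrite (_ : 1 + _ = (T%:R + 1) / T%:R) ?mulf_neq0 ?invr_eq0 //; field.
rewrite Ip_lin_pow // natrX (_ : 1 - (1 + _) = - (T%:R : rat)^-1); last by ring.
rewrite (exprNn ((T%:R : rat)^-1)) exprVn; field.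
by rewrite expf_neq0 // t1 tnz addrC natr1 pnatr_eq0.
Qed.

Lemma final_alg (SV SP N1 T Q E Qd Qn : rat) :
  N1 != 0 -> T + 1 = Q -> Q != 0 -> Qn != 0 -> Qd != 0 -> E * Qd = Qn * Q ->
  (SV / N1) * Qn = (T / (T + 1) * SP) * Qd -> SV = N1 * T / E * SP.
Proof.
move=> n1 hQ q0 qn qd hE I.
have -> : E = Qn * Q / Qd by rewrite -hE mulfK.
have -> : SV = T / (T + 1) * SP * Qd / Qn * N1.
  by rewrite -I; field; rewrite qn n1.
rewrite -hQ; field.
by rewrite qd qn hQ q0.
Qed.

Unset Implicit Arguments.
Theorem corollary1 (F : finFieldType) (n : nat) (V : {vspace 'rV[F]_n}) :
  let q := #|F| in
  \sum_(k < n.+1)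
     (#|Aw (mem V) k|)%:R / (((q - 1) ^ k * 'C(n, k))%N)%:R
  = (((n + 1) * (q - 1))%N)%:R / ((q ^ (1 + n - \dim V))%N)%:R *
    \sum_(k < n.+1)
      (#|Aw (mem (perp V)) k|)%:R / (k.+1)%:R
        * (1 - (-1) ^+ k.+1 / (((q - 1) ^ k.+1)%N)%:R) :> rat.
Proof.
move=> q.
have q1 : (1 < q)%N := finNzRing_gt1 F.
have T0 : (0 < q - 1)%N by rewrite subn_gt0.
have tnz : ((q - 1)%:R : rat) != 0 by rewrite pnatr_eq0 -lt0n.
pose b : {poly rat} := ((q - 1)%:R : rat)^-1 *: 'X.
have M := macw V (1 - 'X : {poly rat}) b.
have I := congr1 Ip M; rewrite !IpMn !Ip_sum in I.
have eV : \sum_(v | v \in V) Ip ((1 - 'X) ^+ (n - wt v) * b ^+ wt v) =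
   (\sum_(k < n.+1) (#|Aw (mem V) k|)%:R / (((q - 1) ^ k * 'C(n, k))%N)%:R)
     / (n.+1)%:R.
  rewrite (sum_wt _ (fun k : nat => Ip ((1 - 'X) ^+ (n - k) * b ^+ k))) mulr_suml.
  apply: eq_bigr => k _; rewrite -mulrA; congr (_ * _).
  have kn : (k <= n)%N by rewrite -ltnS.
  by rewrite termV // natrM natrX.
have hb : b *+ (q - 1) = 'X by rewrite /b -scaler_nat scalerA divff // scale1r.
have hc : (1 - 'X - b : {poly rat}) = 1 - (1 + ((q - 1)%:R : rat)^-1) *: 'X.
  by rewrite /b scalerDl scale1r opprD addrA.
have eP : \sum_(u in perp V)
      Ip ((1 - 'X + b *+ (q - 1)) ^+ (n - wt u) * (1 - 'X - b) ^+ wt u) =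
    (q - 1)%:R / ((q - 1)%:R + 1) *
    \sum_(k < n.+1) (#|Aw (mem (perp V)) k|)%:R / (k.+1)%:R
        * (1 - (-1) ^+ k.+1 / (((q - 1) ^ k.+1)%N)%:R).
  rewrite hb subrK hc.
  under eq_bigr => u _ do rewrite expr1n mul1r.
  rewrite (sum_wt _ (fun k : nat => Ip ((1 - (1 + ((q - 1)%:R : rat)^-1) *: 'X) ^+ k))).
  rewrite mulr_sumr; apply: eq_bigr => k _; rewrite termP //.
  have hr (a c d Z : rat) : a * (c / d * Z) = c * (a / d * Z) by ring.
  by rewrite hr.
have cV : #|[set v | v \in V]| = (q ^ \dim V)%N.
  by rewrite -(card_vspace V); apply: eq_card => v; rewrite inE.
have dn : (\dim V <= n)%N.
  by have := dimvS (subvf V); rewrite dimvf /dim /= mul1n.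
rewrite eV eP in I.
rewrite (natrM _ (n + 1) (q - 1)) addn1.
apply: (final_alg (Q := q%:R) (Qd := (q ^ \dim V)%:R) (Qn := (q ^ n)%:R)).
- by rewrite pnatr_eq0.
- by rewrite natr1 subn1 prednK // ltnW.
- by rewrite pnatr_eq0 -lt0n ltnW.
- by rewrite pnatr_eq0 -lt0n expn_gt0 ltnW.
- by rewrite pnatr_eq0 -lt0n expn_gt0 ltnW.
- by rewrite -!natrM -expnD subnK ?add1n ?expnSr //; apply: leq_trans dn _.
- by rewrite !mulr_natr -cV.
Qed.
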